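(* For $k\ge0$ let $(\mathcal{Y}Sym)^k$ be the span of $\{M_t: t\in\mathcal{Y}^k\}$. Then the decomposition $\mathcal{Y}Sym=\bigoplus_{k\ge0}(\mathcal{Y}Sym)^k$ is a coalgebra grading, and with this grading $\mathcal{Y}Sym$ is a cofree graded coalgebra (on $V=(\mathcal{Y}Sym)^1$).
   Context: $\mathcal{Y}_n$ is the set of rooted planar binary trees with $n$ internal nodes; $\mathcal{Y}_0=\{|\}$. $s\vee t$ denotes the tree with left subtree $s$ and right subtree $t$ at the root; each $t\ne|$ is uniquely $t_l\vee t_r$. The Tamari order on $\mathcal{Y}_n$ is generated by replacing a subtree $(a\vee b)\vee c$ by the larger $a\vee(b\vee c)$. $s\backslash t$: $|\backslash t=t$, $s\backslash t=s_l\vee(s_r\backslash t)$. A tree $t\neq|$ is progressive if $t_r=|$; every $t\ne|$ has a unique decomposition $t=t_1\backslash t_2\backslash\cdots\backslash t_k$ into progressive trees. $\mathcal{Y}^0=\mathcal{Y}_0$, and for $k\ge1$, $\mathcal{Y}^k$ is the set of trees (of all sizes) with exactly $k$ progressive components. $\mathcal{Y}Sym$ is the graded Hopf algebra over $\mathbb{Q}$ with basis $\{F_t\}$; leaves of $t\in\mathcal{Y}_n$ are numbered $0,\dots,n$; splitting $t$ at leaf $i$, $t\to(t_0,t_1)$, is defined recursively by: $|\to(|,|)$; for $t=t_l\vee t_r$, if leaf $i$ is in $t_l$ and $t_l\to(a,b)$ there then $t\to(a,b\vee t_r)$, if leaf $i$ is in $t_r$ and $t_r\to(c,d)$ there then $t\to(t_l\vee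 c,d)$. Coproduct: $\Delta(F_t)=\sum_{i=0}^nF_{t_0}\otimes F_{t_1}$. Monomial basis: $M_t=\sum_{t\le s}\mu_{\mathcal{Y}_n}(t,s)F_s$ (Möbius function of the Tamari order). A coalgebra grading is a decomposition $C=\bigoplus_k C^k$ with $\Delta(C^k)\subseteq\sum_{i+j=k}C^i\otimes C^j$ and counit vanishing on $C^k$, $k\ge1$. The cofree graded coalgebra on a vector space $V$ is $Q(V)=\bigoplus_{k\ge0}V^{\otimes k}$ with deconcatenation coproduct $\Delta(v_1\otimes\cdots\otimes v_k)=\sum_{i=0}^k(v_1\otimes\cdots\otimes v_i)\otimes(v_{i+1}\otimes\cdots\otimes v_k)$; a graded coalgebra is cofree if it is isomorphic as a graded coalgebra to some $Q(V)$. *)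

(* Defs.v *)
From HB Require Import structures.
From mathcomp Require Import all_boot all_order all_algebra.
From mathcomp Require Import finmap.
From mathcomp.multinomials Require Import monalg.
From Stdlib Require Import Relations ClassicalEpsilon.

Set Implicit Arguments.
Unset Strict Implicit.
Unset Printing Implicit Defensive.
Import GRing.Theory.
Local Open Scope ring_scope.

(* Rooted planar binary trees.  Leaf = |, Node s t = s \/ t.          *)
Inductive tree := Leaf | Node of tree & tree.

Fixpoint tree_enc (t : tree) : GenTree.tree unit :=
  match t with
  | Leaf => GenTree.Leaf tt
  | Node l r => GenTree.Node 0 [:: tree_enc l; tree_enc r]
  end.

Fixpoint tree_dec (g : GenTree.tree unit) : option tree :=
  match g with
  | GenTree.Leaf _ => Some Leaf
  | GenTree.Node _ [:: gl; gr] =>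
      match tree_dec gl, tree_dec gr with
      | Some l, Some r => Some (Node l r)
      | _, _ => None
      end
  | GenTree.Node _ _ => None
  end.

Lemma tree_encK : pcancel tree_enc tree_dec.
Proof. by elim=> [|l IHl r IHr] //=; rewrite IHl IHr. Qed.

HB.instance Definition _ := Countable.copy tree (pcan_type tree_encK).

(* number of internal nodes: t \in Y_n iff tsize t = n *)
Fixpoint tsize (t : tree) : nat :=
  match t with Leaf => 0%N | Node l r => (tsize l + tsize r).+1 end.

(* s \ t  :  | \ t = t,  s \ t = s_l \/ (s_r \ t) *)
Fixpoint under (s t : tree) : tree :=
  match s with Leaf => t | Node sl sr => Node sl (under sr t) end.

Definition progressive (t : tree) : bool :=
  if t is Node _ Leaf then true else false.

(* The decomposition t = t_1 \ t_2 \ ... \ t_k into progressive trees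
   (empty for t = |).  Since (a \/ |) \ r = a \/ r, the first component of
   a \/ r is a \/ | and the rest is the decomposition of r. *)
Fixpoint prog_decomp (t : tree) : seq tree :=
  match t with Leaf => [::] | Node a r => Node a Leaf :: prog_decomp r end.

Definition inYk (k : nat) (t : tree) : bool := size (prog_decomp t) == k.

Inductive rot_step : tree -> tree -> Prop :=
  | rot_root a b c : rot_step (Node (Node a b) c) (Node a (Node b c))
  | rot_left l l' r : rot_step l l' -> rot_step (Node l r) (Node l' r)
  | rot_right l r r' : rot_step r r' -> rot_step (Node l r) (Node l r').

Definition tamari_le (s t : tree) : Prop := clos_refl_trans tree rot_step s t.

Definition tamari_leb (s t : tree) : bool :=
  if excluded_middle_informative (tamari_le s t) then true else false.

Fixpoint trees_upto (n : nat) : seq (seq tree) :=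
  match n with
  | 0%N => [:: [:: Leaf]]
  | n'.+1 =>
      let T := trees_upto n' in
      rcons T (flatten [seq [seq Node l r | l <- nth [::] T i,
                                                 r <- nth [::] T (n' - i)]
                         | i <- iota 0 n])
  end.

Definition trees (n : nat) : seq tree := nth [::] (trees_upto n) n.

Definition zeta_mx (n : nat) : 'M[rat]_(size (trees n)) :=
  \matrix_(i, j) (tamari_leb (nth Leaf (trees n) i) (nth Leaf (trees n) j))%:R.

Definition mobius (n : nat) (s t : tree) : rat :=
  \sum_(i < size (trees n)) \sum_(j < size (trees n))
     ((nth Leaf (trees n) i == s) && (nth Leaf (trees n) j == t))%:R
       * invmx (zeta_mx n) i j.

(* YSym = Q-vector space with basis {F_t}, realized as {malg rat[tree]};
   F_t = bas t.  Tensor products of free spaces are realized on the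
   product basis. *)
Notation YSym := {malg rat[tree]}.

Definition bas {K : choiceType} (k : K) : {malg rat[K]} := @mkmalgU K rat k 1.
Notation YSym2 := {malg rat[(tree * tree)%type]}.

Definition F (t : tree) : YSym := bas t.

(* splitting at leaf i (leaves of t numbered 0..tsize t from left to right) *)
Fixpoint split_at (t : tree) (i : nat) : tree * tree :=
  match t with
  | Leaf => (Leaf, Leaf)
  | Node l r =>
      if (i <= tsize l)%N then
        let: (a, b) := split_at l i in (a, Node b r)
      else
        let: (c, d) := split_at r (i - (tsize l).+1) in (Node l c, d)
  end.

Definition DeltaF (t : tree) : YSym2 :=
  \sum_(i < (tsize t).+1) bas (split_at t i).

Definition Delta (x : YSym) : YSym2 := \sum_(t <- msupp x) x@_t *: DeltaF t.
Definition eps (x : YSym) : rat := x@_Leaf.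

Definition M (t : tree) : YSym :=
  \sum_(s <- trees (tsize t) | tamari_leb t s) mobius (tsize t) t s *: F s.

Definition inspan (V : lmodType rat) (P : V -> Prop) (v : V) : Prop :=
  exists (vs : seq V) (cs : seq rat),
    (forall w, w \in vs -> P w) /\ v = \sum_(i < size vs) cs`_i *: vs`_i.

Definition tens (A B : choiceType) (x : {malg rat[A]}) (y : {malg rat[B]})
  : {malg rat[(A * B)%type]} :=
  \sum_(a <- msupp x) \sum_(b <- msupp y) (x@_a * y@_b) *: bas (a, b).

Definition YSymk (k : nat) (x : YSym) : Prop :=
  inspan (fun v => exists t, inYk k t /\ v = M t) x.

Definition YSymk2 (k : nat) (z : YSym2) : Prop :=
  inspan (fun w => exists (i j : nat) (x y : YSym),
            (i + j)%N = k /\ YSymk i x /\ YSymk j y /\ w = tens x y) z.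

(* Tensor coalgebra.  The tensor powers of a subspace V of YSym are
   realized inside T(YSym) = {malg rat[seq tree]} (basis: words of trees,
   a word of length k being F_{t1} (x) ... (x) F_{tk}). *)
Notation TY := {malg rat[seq tree]}.
Notation TY2 := {malg rat[(seq tree * seq tree)%type]}.

Fixpoint tensn (vs : seq YSym) : TY :=
  match vs with
  | [::] => bas (Nil tree)
  | v :: vs' =>
      let z := tensn vs' in
      \sum_(a <- msupp v) \sum_(w <- msupp z) (v@_a * z@_w) *: bas (a :: w)
  end.

Definition tpow (inV : YSym -> Prop) (k : nat) (z : TY) : Prop :=
  inspan (fun w => exists vs : seq YSym,
            size vs = k /\ (forall v, v \in vs -> inV v) /\ w = tensn vs) z.

Definition cofreeQ (inV : YSym -> Prop) (z : TY) : Prop :=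
  inspan (fun w => exists k, tpow inV k w) z.

Definition deconc (z : TY) : TY2 :=
  \sum_(w <- msupp z) z@_w *:
     \sum_(i < (size w).+1) bas (take i w, drop i w).
Definition epsQ (z : TY) : rat := z@_[::].

Definition tensmap (phi : TY -> YSym) (z : TY2) : YSym2 :=
  \sum_(p <- msupp z) z@_p *: tens (phi (bas p.1)) (phi (bas p.2)).

(* Main.v *)
From Pilot Require Import Defs.
From HB Require Import structures.
From mathcomp Require Import all_boot all_order all_algebra.
From mathcomp Require Import finmap.
From mathcomp.multinomials Require Import monalg.
From Stdlib Require Import Relations ClassicalEpsilon.
From mathcomp Require Import zify.
Import GRing.Theory.
Set Implicit Arguments.
Unset Strict Implicit.
Unset Printing Implicit Defensive.


Notation tle := tamari_le.
Notation tsz := Pilot.Defs.tsize.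

Lemma tle_refl t : tle t t. Proof. exact: rt_refl. Qed.
Lemma tle_trans a b c : tle a b -> tle b c -> tle a c.
Proof. exact: rt_trans. Qed.
Lemma tle_rot a b c : tle (Node (Node a b) c) (Node a (Node b c)).
Proof. apply: rt_step; constructor. Qed.
Lemma tle_nodeL l l' r : tle l l' -> tle (Node l r) (Node l' r).
Proof.
elim=> [x y H|x|x y z _ H1 _ H2]; first by apply: rt_step; constructor.
  exact: rt_refl.
exact: rt_trans H1 H2.
Qed.
Lemma tle_nodeR l r r' : tle r r' -> tle (Node l r) (Node l r').
Proof.
elim=> [x y H|x|x y z _ H1 _ H2]; first by apply: rt_step; constructor.
  exact: rt_refl.
exact: rt_trans H1 H2.
Qed.
Lemma tle_node l l' r r' : tle l l' -> tle r r' -> tle (Node l r) (Node l' r').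
Proof. move=> H1 H2; apply: tle_trans (tle_nodeL _ H1) (tle_nodeR _ H2). Qed.

Lemma rot_size a b : rot_step a b -> tsz a = tsz b.
Proof. elim=> /= *; lia. Qed.
Lemma tle_size a b : tle a b -> tsz a = tsz b.
Proof. elim=> [x y /rot_size|//|x y z _ -> _ ->] //. Qed.

Fixpoint pot t := match t with Leaf => 0%N | Node l r => (pot l + pot r + tsz r)%N end.
Lemma rot_pot a b : rot_step a b -> (pot a < pot b)%N.
Proof.
elim=> /= [x y z|l l' r _ H|l r r' H1 H2]; first lia.
  lia.
rewrite (rot_size H1); lia.
Qed.
Lemma tle_pot a b : tle a b -> (pot a <= pot b)%N.
Proof. elim=> [x y /rot_pot/ltnW|//|x y z _ H1 _ H2] //; exact: leq_trans H1 H2. Qed.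
Lemma tle_pot_lt a b : tle a b -> a <> b -> (pot a < pot b)%N.
Proof.
move=> H0; have H := clos_rt_rt1n _ _ _ _ H0; destruct H as [|y z H1 H2]; first by [].
move=> _.
have H3 := rot_pot H1; have H4 := tle_pot (clos_rt1n_rt _ _ _ _ H2).
exact: leq_trans H3 H4.
Qed.
Lemma tle_antisym a b : tle a b -> tle b a -> a = b.
Proof.
move=> H1 H2; case: (boolP (a == b)) => [/eqP //|/eqP ne].
have := tle_pot_lt H1 ne; have := tle_pot H2; lia.
Qed.

Lemma under_monoR s t t' : tle t t' -> tle (under s t) (under s t').
Proof. by elim: s => //= l _ r IH /IH; apply: tle_nodeR. Qed.
Lemma under_step s s' t : rot_step s s' -> tle (under s t) (under s' t).
Proof.
elim=> /= [a b c|l l' r H _|l r r' _ H].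
- exact: tle_rot.
- by apply: tle_nodeL; apply: rt_step.
- exact: tle_nodeR.
Qed.
Lemma under_monoL s s' t : tle s s' -> tle (under s t) (under s' t).
Proof.
elim=> [x y /under_step //|x|x y z _ H1 _ H2]; first exact: tle_refl.
exact: tle_trans H1 H2.
Qed.
Lemma node_under a b r : tle (Node (under a b) r) (under a (Node b r)).
Proof.
elim: a => /= [|a1 _ a2 IH]; first exact: tle_refl.
apply: tle_trans (tle_rot _ _ _) _; exact: tle_nodeR.
Qed.
Lemma split_le u i : tle u (under (split_at u i).1 (split_at u i).2).
Proof.
elim: u i => /= [|l IHl r IHr] i; first exact: tle_refl.
case: ifP => _.
  case E: (split_at l i) => [a b] /=.
  have := IHl i; rewrite E /= => H.
  apply: tle_trans (node_under _ _ _); exact: tle_nodeL.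
case E: (split_at r (i - (tsz l).+1)) => [c d] /=.
have := IHr (i - (tsz l).+1); rewrite E /= => H; exact: tle_nodeR.
Qed.

Definition ple (p q : tree * tree) := tle p.1 q.1 /\ tle p.2 q.2.

Lemma split_rot a b i : rot_step a b -> ple (split_at a i) (split_at b i).
Proof.
move: a b; rewrite /ple => u0 v0 H; move: H i.
elim=> [x y z|l l' r H IH|l r r' H IH] i /=.
- case: (leqP i (tsz x + tsz y).+1) => Hi.
  + case: (leqP i (tsz x)) => Hx.
    * case: (split_at x i) => a0 a1 /=; split; [exact: tle_refl|exact: tle_rot].
    * case: leqP => Hy; last lia.
      case: (split_at y (i - (tsz x).+1)) => b0 b1 /=.
      split; exact: tle_refl.
  + case: leqP => Hx; first lia.
    case: leqP => Hy; first lia.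
    have -> : (i - (tsz x).+1 - (tsz y).+1 = i - (tsz x + tsz y).+2)%N by lia.
    case: (split_at z _) => c0 c1 /=; split; [exact: tle_rot|exact: tle_refl].
- rewrite (rot_size H); case: ifP => _.
  + have := IH i; case: (split_at l i) => a b; case: (split_at l' i) => a' b' [/= H1 H2].
    split=> //; exact: tle_nodeL.
  + case: (split_at r _) => c d /=; split; last exact: tle_refl.
    by apply: tle_nodeL; apply: rt_step.
- case: ifP => _.
  + case: (split_at l i) => a b /=; split; first exact: tle_refl.
    by apply: tle_nodeR; apply: rt_step.
  + have := IH (i - (tsz l).+1).
    case: (split_at r _) => c d; case: (split_at r' _) => c' d' [/= H1 H2].
    split=> //; exact: tle_nodeR.
Qed.

Lemma split_mono a b i : tle a b -> ple (split_at a i) (split_at b i).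
Proof.
elim=> [x y /split_rot //|x|x y z _ [H1 H2] _ [H3 H4]].
  split; exact: tle_refl.
split; [exact: tle_trans H1 H3|exact: tle_trans H2 H4].
Qed.

Lemma split0 t : split_at t 0 = (Leaf, t).
Proof. by elim: t => //= l IHl r _; rewrite IHl. Qed.

Lemma split_under r s : split_at (under r s) (tsz r) = (r, s).
Proof.
elim: r => /= [|a _ b IH]; first exact: split0.
have -> : ((tsz a + tsz b).+1 <= tsz a)%N = false by lia.
have -> : ((tsz a + tsz b).+1 - (tsz a).+1 = tsz b)%N by lia.
by rewrite IH.
Qed.

Lemma tsize_under r s : tsz (under r s) = (tsz r + tsz s)%N.
Proof. elim: r => //= a _ b ->; lia. Qed.

Theorem key u r s :
  tle u (under r s) <-> (tle (split_at u (tsz r)).1 r /\ tle (split_at u (tsz r)).2 s).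
Proof.
split.
  by move/(split_mono (tsz r)); rewrite split_under.
case=> H1 H2; apply: tle_trans (split_le u (tsz r)) _.
apply: tle_trans (under_monoL _ H1) (under_monoR _ H2).
Qed.

Definition fold (ps : seq tree) := foldr under Leaf ps.
Lemma under_assoc a b c : under (under a b) c = under a (under b c).
Proof. by elim: a => //= x _ y ->. Qed.
Lemma fold_cat xs ys : fold (xs ++ ys) = under (fold xs) (fold ys).
Proof. by elim: xs => //= x xs ->; rewrite under_assoc. Qed.
Lemma prog_under r s : prog_decomp (under r s) = prog_decomp r ++ prog_decomp s.
Proof. by elim: r => //= a _ b ->. Qed.
Lemma fold_prog t : fold (prog_decomp t) = t.
Proof. by elim: t => //= a _ b ->. Qed.
Lemma prog_all t : all progressive (prog_decomp t).
Proof. by elim: t. Qed.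
Lemma prog_fold ps : all progressive ps -> prog_decomp (fold ps) = ps.
Proof.
elim: ps => //= p ps IH /andP[]; case: p => // a [] //= _ /IH <-.
by rewrite fold_prog.
Qed.

Lemma size_trees_upto n : size (trees_upto n) = n.+1.
Proof. by elim: n => //= n IH; rewrite size_rcons IH. Qed.

Lemma trees_upto_nth n m : (m <= n)%N -> nth [::] (trees_upto n) m = trees m.
Proof.
elim: n => [|n IH] Hm; first by have -> : m = 0%N by lia.
case: (ltnP m n.+1) => Hm'.
  by rewrite /= nth_rcons size_trees_upto Hm' IH.
by have -> : m = n.+1 by lia.
Qed.

Lemma treesS n : trees n.+1 =
  flatten [seq [seq Node l r | l <- trees i, r <- trees (n - i)] | i <- iota 0 n.+1].
Proof.
have E : trees_upto n.+1 = rcons (trees_upto n)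
   (flatten [seq [seq Node l r | l <- nth [::] (trees_upto n) i,
                                   r <- nth [::] (trees_upto n) (n - i)]
                         | i <- iota 0 n.+1]) by [].
rewrite /trees E nth_rcons size_trees_upto ltnn eqxx.
have H : {in iota 0 n.+1, (fun i => [seq Node l r | l <- nth [::] (trees_upto n) i,
                                   r <- nth [::] (trees_upto n) (n - i)]) =1
   (fun i => [seq Node l r | l <- trees i, r <- trees (n - i)])}.
  move=> i; rewrite mem_iota => /andP[_ Hi].
  by rewrite !trees_upto_nth //; lia.
by congr flatten; apply/eq_in_map.
Qed.

Lemma count_allpairs_node l r A B :
  count_mem (Node l r) [seq Node a b | a <- A, b <- B] =
  (count_mem l A * count_mem r B)%N.
Proof.
elim: A => //= a A IH; rewrite count_cat IH count_map mulnDl; congr (_ + _)%N.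
case: (eqVneq a l) => [->|ne] /=.
  by rewrite mul1n; apply: eq_count => b /=; apply/eqP/eqP => [[->]|->].
rewrite mul0n; apply/eqP; rewrite -leqn0 leqNgt -has_count; apply/hasP => -[b _ /= /eqP[]].
by move=> E; move: ne; rewrite E eqxx.
Qed.

Lemma count_trees t n : count_mem t (trees n) = (tsz t == n).
Proof.
elim: t n => [|l IHl r IHr] [|n] //.
- rewrite treesS count_flatten -map_comp; elim: (iota 0 n.+1) => //= i s ->.
  rewrite addn0; apply/eqP; rewrite -leqn0 leqNgt -has_count; apply/hasP.
  by move=> -[x /allpairsP[[a b] [_ _ ->]]].
- rewrite treesS count_flatten -map_comp.
  rewrite (eq_map (g := fun i => ((tsz l == i) * (tsz r == n - i))%N)); last first.
    by move=> i /=; rewrite count_allpairs_node IHl IHr.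
  rewrite sumnE big_map.
  case: (ltnP (tsz l) n.+1) => Hl.
    rewrite (bigD1_seq (tsz l)) ?iota_uniq //; last by rewrite mem_iota; lia.
    rewrite eqxx mul1n big1 ?addn0.
      by apply/eqP; case: eqP => /= H; apply/eqP; lia.
    by move=> i /negPf; rewrite eq_sym => ->.
  rewrite big1_seq; last first.
    by move=> i; rewrite mem_iota => /andP[_ Hi]; have -> : (tsz l == i) = false by lia.
  rewrite /=; apply/esym/eqP; lia.
Qed.

Lemma trees_uniq n : uniq (trees n).
Proof.
apply: count_mem_uniq => t; rewrite count_trees.
by apply/esym; rewrite -has_pred1 has_count count_trees; case: (_ == _).
Qed.

Lemma mem_trees t n : (t \in trees n) = (tsz t == n).
Proof. by rewrite -has_pred1 has_count count_trees; case: (_ == _). Qed.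

Local Open Scope ring_scope.

Section Lext.
Context {K : choiceType} {V : lmodType rat}.

Definition lext (g : K -> V) (x : {malg rat[K]}) : V := \sum_(k <- msupp x) x@_k *: g k.

Lemma lextW g x (d : {fset K}) : (msupp x `<=` d)%fset -> lext g x = \sum_(k <- d) x@_k *: g k.
Proof.
move=> H; rewrite /lext; apply: big_fset_incl => // k _ /mcoeff_outdom ->.
by rewrite scale0r.
Qed.

Lemma lext_is_linear g : linear (lext g).
Proof.
move=> c x y.
have Hd : (msupp (c *: x + y) `<=` msupp x `|` msupp y)%fset.
  apply: fsubset_trans (msuppD_le _ _) _; apply: fsetSU; exact: msuppZ_le.
rewrite (lextW g Hd) (lextW g (fsubsetUl (msupp x) (msupp y))) (lextW g (fsubsetUr (msupp x) (msupp y))).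
rewrite scaler_sumr -big_split /=; apply: eq_bigr => k _.
by rewrite mcoeffD mcoeffZ scalerDl scalerA.
Qed.

HB.instance Definition _ g := GRing.isLinear.Build rat {malg rat[K]} V *:%R (lext g)
  (lext_is_linear g).

Lemma mcoeff_bas (k k' : K) : (bas k)@_k' = (k == k')%:R.
Proof. by rewrite /bas mcoeffU. Qed.

Lemma msupp_bas (k : K) : msupp (bas k) = [fset k]%fset.
Proof. by rewrite /bas msuppU oner_eq0. Qed.

Lemma lext_bas g k : lext g (bas k) = g k.
Proof. by rewrite /lext msupp_bas big_seq_fset1 mcoeff_bas eqxx scale1r. Qed.

Lemma lext_eq_in g1 g2 x : (forall k, k \in msupp x -> g1 k = g2 k) -> lext g1 x = lext g2 x.
Proof. by move=> H; rewrite /lext big_seq [RHS]big_seq; apply: eq_bigr => k /H ->. Qed.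

Lemma lext_eq g1 g2 x : (forall k, g1 k = g2 k) -> lext g1 x = lext g2 x.
Proof. by move=> H; apply: lext_eq_in => k _. Qed.

Lemma lext_sumg (I : Type) (r : seq I) (P : pred I) (h : I -> K -> V) x :
  lext (fun k => \sum_(i <- r | P i) h i k) x = \sum_(i <- r | P i) lext (h i) x.
Proof.
rewrite /lext (exchange_big_dep xpredT) //=; apply: eq_bigr => k _.
by rewrite scaler_sumr; apply: eq_bigl => i; rewrite andbT.
Qed.

Lemma lext_scaleg c g x : lext (fun k => c *: g k) x = c *: lext g x.
Proof. by rewrite /lext scaler_sumr; apply: eq_bigr => k _; rewrite !scalerA mulrC. Qed.

Lemma lext_addg g1 g2 x : lext (fun k => g1 k + g2 k) x = lext g1 x + lext g2 x.
Proof. by rewrite /lext -big_split; apply: eq_bigr => k _; rewrite scalerDr. Qed.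

Lemma lext0g x : lext (fun _ => 0) x = 0.
Proof. by rewrite /lext big1 // => k _; rewrite scaler0. Qed.

End Lext.

Section LextMore.
Context {K : choiceType}.

Lemma lext_basK (x : {malg rat[K]}) : lext bas x = x.
Proof.
apply/malgP => k'; rewrite /lext raddf_sum /=.
case: (boolP (k' \in msupp x)) => Hk.
  rewrite (big_fsetD1 k') //= mcoeffZ mcoeff_bas eqxx mulr1 big1_fset ?addr0 //.
  move=> k; rewrite in_fsetD1 => /andP[ne _] _; rewrite mcoeffZ mcoeff_bas.
  by rewrite (negPf ne) mulr0.
rewrite (mcoeff_outdom Hk) big1_fset // => k Hk' _; rewrite mcoeffZ mcoeff_bas.
by case: eqP => [E|]; [move: Hk; rewrite -E Hk'|rewrite mulr0].
Qed.

Lemma lext_uniq {V : lmodType rat} (f : {linear {malg rat[K]} -> V}) g :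
  (forall k, f (bas k) = g k) -> forall x, f x = lext g x.
Proof.
move=> H x; rewrite -{1}(lext_basK x) /lext linear_sum; apply: eq_bigr => k _.
by rewrite linearZ H.
Qed.

Lemma lext_comp {V W : lmodType rat} (f : {linear V -> W}) (g : K -> V) x :
  f (lext g x) = lext (fun k => f (g k)) x.
Proof. by rewrite /lext linear_sum; apply: eq_bigr => k _; rewrite linearZ. Qed.

Lemma lext_lext {K' : choiceType} {W : lmodType rat} (h : K' -> W) (g : K -> {malg rat[K']}) x :
  lext h (lext g x) = lext (fun k => lext h (g k)) x.
Proof. exact: (lext_comp (lext h)). Qed.

Lemma coef_lext_bas (h : K -> K) x k :
  {in msupp x, injective h} -> k \in msupp x -> (lext (fun a => bas (h a)) x)@_(h k) = x@_k.
Proof.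
move=> Hi Hk; rewrite /lext raddf_sum /= (big_fsetD1 k) //= mcoeffZ mcoeff_bas eqxx mulr1.
rewrite big1_fset ?addr0 // => a; rewrite in_fsetD1 => /andP[ne Ha] _.
rewrite mcoeffZ mcoeff_bas; case: eqP => [/Hi E|]; last by rewrite mulr0.
by move: ne; rewrite E ?eqxx.
Qed.

Lemma coef_sum_eq (x : {malg rat[K]}) (k : K) : \sum_(a <- msupp x) x@_a * (a == k)%:R = x@_k.
Proof.
have := congr1 (mcoeff k) (lext_basK x); rewrite /lext raddf_sum /= => <-.
by apply: eq_bigr => a _; rewrite mcoeffZ mcoeff_bas.
Qed.

End LextMore.

Lemma lext_swap {A B : choiceType} {W : lmodType rat} (G : A -> B -> W) x y :
  lext (fun b => lext (fun a => G a b) x) y = lext (fun a => lext (fun b => G a b) y) x.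
Proof.
rewrite /lext; under eq_bigr do rewrite scaler_sumr.
rewrite exchange_big /=; apply: eq_bigr => a _; rewrite scaler_sumr.
by apply: eq_bigr => b _; rewrite !scalerA mulrC.
Qed.

Definition bil {A B C : choiceType} (h : A -> B -> C) (x : {malg rat[A]}) (y : {malg rat[B]})
  : {malg rat[C]} :=
  \sum_(a <- msupp x) \sum_(b <- msupp y) (x@_a * y@_b) *: bas (h a b).

Section Bil.
Context {A B C : choiceType} (h : A -> B -> C).

Lemma bil_lext1 x y : bil h x y = lext (fun a => lext (fun b => bas (h a b)) y) x.
Proof.
rewrite /bil /lext; apply: eq_bigr => a _; rewrite scaler_sumr; apply: eq_bigr => b _.
by rewrite scalerA.
Qed.

Lemma bil_lext2 x y : bil h x y = lext (fun b => lext (fun a => bas (h a b)) x) y.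
Proof. by rewrite bil_lext1 lext_swap. Qed.

Lemma bil_bas a b : bil h (bas a) (bas b) = bas (h a b).
Proof. by rewrite bil_lext1 !lext_bas. Qed.

Lemma bil_lin {W : lmodType rat} (L : {linear {malg rat[C]} -> W}) x y :
  L (bil h x y) = lext (fun a => lext (fun b => L (bas (h a b))) y) x.
Proof. by rewrite bil_lext1 lext_comp; apply: lext_eq => a; rewrite lext_comp. Qed.

Lemma bil_lextL {A' : choiceType} (g : A' -> {malg rat[A]}) x y :
  bil h (lext g x) y = lext (fun a => bil h (g a) y) x.
Proof. by rewrite bil_lext1 lext_lext; apply: lext_eq => a; rewrite bil_lext1. Qed.

Lemma bil_lextR {B' : choiceType} (g : B' -> {malg rat[B]}) x y :
  bil h x (lext g y) = lext (fun b => bil h x (g b)) y.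
Proof. by rewrite bil_lext2 lext_lext; apply: lext_eq => a; rewrite bil_lext2. Qed.

Lemma bil_sumL (I : Type) (r : seq I) (P : pred I) (f : I -> {malg rat[A]}) y :
  bil h (\sum_(i <- r | P i) f i) y = \sum_(i <- r | P i) bil h (f i) y.
Proof. by rewrite bil_lext1 linear_sum; apply: eq_bigr => i _; rewrite bil_lext1. Qed.

Lemma bil_sumR (I : Type) (r : seq I) (P : pred I) x (f : I -> {malg rat[B]}) :
  bil h x (\sum_(i <- r | P i) f i) = \sum_(i <- r | P i) bil h x (f i).
Proof. by rewrite bil_lext2 linear_sum; apply: eq_bigr => i _; rewrite bil_lext2. Qed.

Lemma bilZL c x y : bil h (c *: x) y = c *: bil h x y.
Proof. by rewrite !(bil_lext1 _ y) linearZ. Qed.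
Lemma bilZR c x y : bil h x (c *: y) = c *: bil h x y.
Proof. by rewrite !(bil_lext2 x) linearZ. Qed.

End Bil.

Lemma coef_bil {A B C : choiceType} (h : A -> B -> C) x y c :
  (bil h x y)@_c = \sum_(a <- msupp x) \sum_(b <- msupp y) x@_a * y@_b * (h a b == c)%:R.
Proof.
rewrite /bil raddf_sum; apply: eq_bigr => a _; rewrite raddf_sum; apply: eq_bigr => b _.
by rewrite /= mcoeffZ mcoeff_bas.
Qed.

Lemma coef_bil_inj {A B C : choiceType} (h : A -> B -> C) x y a0 b0 :
  (forall a b, (h a b == h a0 b0) = (a == a0) && (b == b0)) ->
  (bil h x y)@_(h a0 b0) = x@_a0 * y@_b0.
Proof.
move=> Hh; rewrite coef_bil.
rewrite -(coef_sum_eq x a0) mulr_suml; apply: eq_bigr => a _.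
rewrite -(coef_sum_eq y b0) !mulr_sumr; apply: eq_bigr => b _.
by rewrite Hh; case: (a == a0); case: (b == b0); rewrite /= ?mulr0 ?mulr1 ?mul0r ?mul1r;
  rewrite ?mulr0 ?mulr1.
Qed.

Lemma tlebP s t : reflect (tle s t) (tamari_leb s t).
Proof. by rewrite /tamari_leb; case: excluded_middle_informative => H; constructor. Qed.

Lemma lext_F {W : lmodType rat} (g : tree -> W) t : lext g (F t) = g t.
Proof. exact: lext_bas. Qed.

Definition zf (s : tree) : YSym := \sum_(t <- trees (tsz s) | tamari_leb s t) F t.

Section Zeta.
Variable n : nat.
Local Notation T := (trees n).
Local Notation N := (size (trees n)).
Local Notation tn i := (nth Leaf (trees n) i).
Local Notation Z := (zeta_mx n).

Definition Xm : 'M[rat]_N := 1%:M - Z.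

Lemma tn_inj (i j : 'I_N) : (tn i == tn j) = (i == j).
Proof. by rewrite nth_uniq ?trees_uniq. Qed.

Lemma Xm_entry i j : Xm i j != 0 -> (i != j) && tamari_leb (tn i) (tn j).
Proof.
rewrite !mxE; case: (eqVneq i j) => [->|ne] /=.
  by case: tlebP => [_|[]]; [rewrite subrr eqxx|exact: tle_refl].
by case: (tamari_leb _ _); rewrite //= subrr eqxx.
Qed.

Lemma Xpow_entry k (i j : 'I_N) : (Xm ^+ k) i j != 0 ->
  tle (tn i) (tn j) /\ (pot (tn i) + k <= pot (tn j))%N.
Proof.
elim: k i j => [|k IH] i j.
  rewrite expr0 -idmxE mxE; case: (eqVneq i j) => [->|] _; last by rewrite eqxx.
  by split; [exact: tle_refl|rewrite addn0].
rewrite exprSr -mulmxE mxE => H.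
have [l _ Hl] : exists2 l, true & (Xm ^+ k) i l * Xm l j != 0.
  apply/exists_inP; apply: contraNT H; rewrite negb_exists_in => /forall_inP H.
  by rewrite big1 // => l _; apply/eqP/negbNE/H.
move: Hl; rewrite mulf_eq0 negb_or => /andP[/IH[H1 H2] /Xm_entry/andP[ne /tlebP H3]].
have H4 : tn l <> tn j by move/eqP; rewrite tn_inj (negPf ne).
split; first exact: tle_trans H1 H3.
have := tle_pot_lt H3 H4; lia.
Qed.

Definition Bd := (\max_(j < N) pot (tn j)).+1.

Lemma XpowB : Xm ^+ Bd = 0.
Proof.
apply/matrixP => i j; rewrite mxE; apply/eqP; apply: contraT => /Xpow_entry[_ H].
have := @leq_bigmax _ (fun j : 'I_N => pot (tn j)) j; rewrite /Bd in H. move=> H5. move: H H5. set mm := \max_(_ < _) _. lia.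
Qed.

Definition Pm : 'M[rat]_N := \sum_(k < Bd) Xm ^+ k.

Lemma ZP : Z *m Pm = 1%:M.
Proof.
have E : Z = 1 - Xm by rewrite /Xm idmxE opprB addrC subrK.
rewrite mulmxE E idmxE; have := subrX1 Xm Bd; rewrite XpowB => H.
by rewrite /Pm -opprB mulNr -H opprB subr0.
Qed.

Lemma unitZ : Z \in unitmx.
Proof. exact: (mulmx1_unit ZP).1. Qed.

Lemma invZ : invmx Z = Pm.
Proof. by rewrite -[RHS]mul1mx -(mulVmx unitZ) -mulmxA ZP mulmx1. Qed.

Lemma mu_supp (i j : 'I_N) : invmx Z i j != 0 -> tamari_leb (tn i) (tn j).
Proof.
rewrite invZ /Pm summxE => H; apply/tlebP.
have [k _ Hk] : exists2 k : 'I_Bd, true & (Xm ^+ k) i j != 0.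
  apply/exists_inP; apply: contraNT H; rewrite negb_exists_in => /forall_inP H.
  by rewrite big1 // => l _; apply/eqP/negbNE/H.
by case: (Xpow_entry Hk).
Qed.

Lemma mobiusE (i j : 'I_N) : mobius n (tn i) (tn j) = invmx Z i j.
Proof.
rewrite /mobius (bigD1 i) //= [X in _ + X]big1 ?addr0; last first.
  by move=> i' ne; rewrite big1 // => j' _; rewrite tn_inj (negPf ne) /= mul0r.
rewrite (bigD1 j) //= tn_inj !eqxx mul1r [X in _ + X]big1 ?addr0 // => j' ne.
by rewrite tn_inj (negPf ne) mul0r.
Qed.

Lemma sum_trees_idx (g : tree -> YSym) (i : 'I_N) :
  \sum_(t <- T | tamari_leb (tn i) t) g t = \sum_(j < N) Z i j *: g (tn j).
Proof.
rewrite (big_nth Leaf) big_mkord big_mkcond; apply: eq_bigr => j _.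
by rewrite mxE; case: (tamari_leb _ _); rewrite ?scale1r ?scale0r.
Qed.

Lemma tsz_tn (i : 'I_N) : tsz (tn i) = n.
Proof. by apply/eqP; rewrite -mem_trees mem_nth. Qed.

Lemma M_idx (i : 'I_N) : M (tn i) = \sum_(j < N) invmx Z i j *: F (tn j).
Proof.
rewrite /M tsz_tn sum_trees_idx; apply: eq_bigr => j _.
rewrite scalerA mobiusE; case: (eqVneq (invmx Z i j) 0) => [->|/mu_supp H].
  by rewrite mulr0.
by rewrite mxE H mul1r.
Qed.

Lemma zf_idx (i : 'I_N) : zf (tn i) = \sum_(j < N) Z i j *: F (tn j).
Proof. by rewrite /zf tsz_tn sum_trees_idx. Qed.

Lemma lext_F_sum {W : lmodType rat} (g : tree -> W) (c : 'I_N -> rat) :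
  lext g (\sum_(j < N) c j *: F (tn j)) = \sum_(j < N) c j *: g (tn j).
Proof. by rewrite linear_sum; apply: eq_bigr => j _; rewrite linearZ /= lext_F. Qed.

Lemma comb_mx (A B : 'M[rat]_N) (i : 'I_N) :
  \sum_(j < N) A i j *: (\sum_(k < N) B j k *: F (tn k)) =
  \sum_(k < N) (A *m B) i k *: F (tn k).
Proof.
under eq_bigr do rewrite scaler_sumr.
rewrite exchange_big /=; apply: eq_bigr => k _.
by rewrite mxE scaler_suml; apply: eq_bigr => j _; rewrite scalerA.
Qed.

Lemma id_comb (i : 'I_N) : \sum_(k < N) (1%:M : 'M[rat]_N) i k *: F (tn k) = F (tn i).
Proof.
rewrite (bigD1 i) //= big1 ?addr0; first by rewrite mxE eqxx scale1r.
by move=> k ne; rewrite mxE eq_sym (negPf ne) scale0r.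
Qed.

Lemma PsiZ_idx (i : 'I_N) : lext M (zf (tn i)) = F (tn i).
Proof.
rewrite zf_idx lext_F_sum.
under eq_bigr do rewrite M_idx.
by rewrite comb_mx mulmxV ?unitZ // id_comb.
Qed.

Lemma PhiM_idx (i : 'I_N) : lext zf (M (tn i)) = F (tn i).
Proof.
rewrite M_idx lext_F_sum.
under eq_bigr do rewrite zf_idx.
by rewrite comb_mx mulVmx ?unitZ // id_comb.
Qed.

End Zeta.

Lemma tn_index s : s = nth Leaf (trees (tsz s)) (index s (trees (tsz s))).
Proof. by rewrite nth_index // mem_trees. Qed.

Lemma index_lt s : (index s (trees (tsz s)) < size (trees (tsz s)))%N.
Proof. by rewrite index_mem mem_trees. Qed.

Lemma PsiZ s : lext M (zf s) = F s.
Proof.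
have := PsiZ_idx (Ordinal (index_lt s)); rewrite /= -tn_index //.
Qed.

Lemma PhiM s : lext zf (M s) = F s.
Proof.
have := PhiM_idx (Ordinal (index_lt s)); rewrite /= -tn_index //.
Qed.

Section Span.
Context {V : lmodType rat}.

Lemma inspan_seq (I : eqType) (P : V -> Prop) (r : seq I) (c : I -> rat) (f : I -> V) :
  (forall i, i \in r -> P (f i)) -> inspan P (\sum_(i <- r) c i *: f i).
Proof.
case: r => [|x0 r] H.
  by exists [::], [::]; split => //; rewrite !big_nil big_ord0.
exists (map f (x0 :: r)), (map c (x0 :: r)); split.
  by move=> w /mapP[i Hi ->]; apply: H.
rewrite (big_nth x0) big_mkord size_map; apply: eq_bigr => j _.
by rewrite !(nth_map x0).
Qed.

Lemma inspan_ind (P Q : V -> Prop) :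
  Q 0 -> (forall a b, Q a -> Q b -> Q (a + b)) -> (forall c a, Q a -> Q (c *: a)) ->
  (forall w, P w -> Q w) -> forall v, inspan P v -> Q v.
Proof.
move=> H0 HD HZ HP v [vs [cs [Hvs ->]]].
apply: (big_ind Q) => // i _; apply: HZ; apply: HP; apply: Hvs; exact: mem_nth.
Qed.

Lemma inspan1 (P : V -> Prop) v : P v -> inspan P v.
Proof.
by move=> H; exists [:: v], [:: 1]; split; [move=> w; rewrite inE => /eqP ->|rewrite big_ord1 scale1r].
Qed.

End Span.

Definition Phi (x : YSym) : YSym := lext zf x.
Definition Psi (x : YSym) : YSym := lext M x.

Lemma PsiPhi x : Psi (Phi x) = x.
Proof. by rewrite /Psi /Phi lext_lext (lext_eq _ PsiZ) lext_basK. Qed.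
Lemma PhiPsi x : Phi (Psi x) = x.
Proof. by rewrite /Psi /Phi lext_lext (lext_eq _ PhiM) lext_basK. Qed.
Lemma Phi_M t : Phi (M t) = F t.
Proof. exact: PhiM. Qed.
Lemma Psi_F t : Psi (F t) = M t.
Proof. exact: lext_F. Qed.

Lemma mcoeff_F t t' : (F t)@_t' = (t == t')%:R.
Proof. exact: mcoeff_bas. Qed.

Lemma YSymk_coef k x : YSymk k x -> forall t, ~~ inYk k t -> (Phi x)@_t = 0.
Proof.
move=> H t Ht; move: x H; apply: inspan_ind.
- by rewrite /Phi linear0 mcoeff0.
- by move=> a b Ha Hb; rewrite /Phi linearD mcoeffD /= -/(Phi a) -/(Phi b) Ha Hb addr0.
- by move=> c a Ha; rewrite /Phi linearZ mcoeffZ /= -/(Phi a) Ha mulr0.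
- move=> w [t' [Ht' ->]]; rewrite Phi_M mcoeff_F.
  by case: eqP Ht Ht' => // -> /negPf ->.
Qed.

Lemma YSymk_supp k x : (forall t, t \in msupp (Phi x) -> inYk k t) -> YSymk k x.
Proof.
move=> H; rewrite -(PsiPhi x) /Psi /lext; apply: inspan_seq => t Ht.
by exists t; split => //; apply: H.
Qed.

Lemma inYk1 t : inYk 1 t = progressive t.
Proof. by case: t => // a [] //= b c; rewrite /inYk /=; case: (prog_decomp c). Qed.

Definition Phi2 (z : YSym2) : YSym2 := lext (fun p : tree * tree => tens (zf p.1) (zf p.2)) z.
Definition Psi2 (z : YSym2) : YSym2 := lext (fun p : tree * tree => tens (M p.1) (M p.2)) z.

Lemma tensE (A B : choiceType) (x : {malg rat[A]}) (y : {malg rat[B]}) : tens x y = bil pair x y.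
Proof. by []. Qed.

Lemma Psi2_tens x y : Psi2 (tens x y) = tens (Psi x) (Psi y).
Proof.
rewrite !tensE /Psi2 bil_lin bil_lextL; apply: lext_eq => a.
rewrite bil_lextR; apply: lext_eq => b; rewrite /= lext_bas //.
Qed.

Lemma Psi2Phi2 z : Psi2 (Phi2 z) = z.
Proof.
rewrite /Psi2 /Phi2 lext_lext -[RHS]lext_basK; apply: lext_eq => -[a b] /=.
rewrite -/(Psi2 _) Psi2_tens /Psi !PsiZ tensE bil_bas //.
Qed.

Definition Dp (t : tree) : YSym2 :=
  \sum_(j < (size (prog_decomp t)).+1)
     bas (fold (take j (prog_decomp t)), fold (drop j (prog_decomp t))).

Lemma split_size u i : (i <= tsz u)%N -> tsz (split_at u i).1 = i.
Proof.
elim: u i => [|l IHl r IHr] i /=; first by case: i.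
move=> Hi; case: ifP => Hl.
  by case E: (split_at l i) => [a b] /=; rewrite -(IHl i Hl) E.
case E: (split_at r (i - (tsz l).+1)%N) => [c d] /=. have := IHr (i - (tsz l).+1)%N; rewrite E /=; move=> ->; lia.
Qed.

Lemma coef_zf a r : (zf a)@_r = (tamari_leb a r)%:R.
Proof.
rewrite /zf raddf_sum /= big_mkcond /=.
under eq_bigr do rewrite mcoeff_F.
case: (boolP (tamari_leb a r)) => H.
  rewrite (bigD1_seq r) ?trees_uniq //=; last by rewrite mem_trees (tle_size (elimT (tlebP _ _) H)).
  rewrite H eqxx big1 ?addr0 // => t ne; rewrite (negPf ne); by case: ifP.
rewrite big1 // => t _; case: ifP => // Ht; case: eqP => // E; by move: Ht H; rewrite E => ->.
Qed.

Lemma take_prog (ps : seq tree) j : all progressive ps -> all progressive (take j ps).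
Proof. by move=> H; apply/allP => x /mem_take/(allP H). Qed.
Lemma drop_prog (ps : seq tree) j : all progressive ps -> all progressive (drop j ps).
Proof. by move=> H; apply/allP => x /mem_drop/(allP H). Qed.

Lemma coef_Dp t r s : (Dp t)@_(r, s) = (t == under r s)%:R.
Proof.
rewrite /Dp raddf_sum /=; under eq_bigr do rewrite mcoeff_bas.
set ps := prog_decomp t.
case: (eqVneq t (under r s)) => [Et|ne].
  have Hps : ps = prog_decomp r ++ prog_decomp s by rewrite /ps Et prog_under.
  have Hj : (size (prog_decomp r) < (size ps).+1)%N by rewrite Hps size_cat; lia.
  have T1 : take (size (prog_decomp r)) ps = prog_decomp r by rewrite Hps take_size_cat.
  have T2 : drop (size (prog_decomp r)) ps = prog_decomp s by rewrite Hps drop_size_cat.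
  rewrite (bigD1 (Ordinal Hj)) //= T1 T2.
  rewrite !fold_prog eqxx big1 ?addr0 // => j ne.
  case: eqP => // -[E1 _]; move: ne; rewrite -val_eqE /= -E1.
  rewrite prog_fold ?take_prog ?prog_all // size_take.
  have Hj2 := ltn_ord j; case: ifP => Hlt; first by rewrite eqxx.
  move/negbT: Hlt; rewrite -leqNgt => Hlt.
  have E3 : (size ps == j)%N by apply/eqP; lia.
  by rewrite eq_sym E3.
rewrite big1 // => j _; case: eqP => // -[E1 E2]; move: ne.
by rewrite -E1 -E2 -fold_cat cat_take_drop /ps fold_prog eqxx.
Qed.

Lemma coef_tens (A B : choiceType) (x : {malg rat[A]}) (y : {malg rat[B]}) a b :
  (tens x y)@_(a, b) = x@_a * y@_b.
Proof. by rewrite tensE (coef_bil_inj (h := pair)) // => a' b'; rewrite xpair_eqE. Qed.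

Lemma term_eq u r s i : (i < (tsz u).+1)%N ->
  (tamari_leb (split_at u i).1 r && tamari_leb (split_at u i).2 s) =
  (i == tsz r) && tamari_leb u (under r s).
Proof.
move=> Hi; case: (eqVneq i (tsz r)) => [->|ne] /=.
  by apply/andP/tlebP => [[/tlebP H1 /tlebP H2]|/key[H1 H2]]; [apply/key|split; apply/tlebP].
apply/negbTE/negP => /andP[/tlebP /tle_size H _]; move: H; rewrite split_size //.
by move=> E; move: ne; rewrite E eqxx.
Qed.

Lemma Phi2_DeltaF u : Phi2 (DeltaF u) = lext Dp (zf u).
Proof.
apply/malgP => -[r s].
rewrite /DeltaF /Phi2 linear_sum raddf_sum /=.
under eq_bigr do rewrite lext_bas coef_tens !coef_zf -natrM mulnb term_eq //.
rewrite /zf linear_sum raddf_sum /=.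
under [in RHS]eq_bigr do rewrite lext_F coef_Dp.
case: (boolP (tamari_leb u (under r s))) => H.
  have Hs : tsz u = (tsz r + tsz s)%N by rewrite (tle_size (elimT (tlebP _ _) H)) tsize_under.
  have Hr : (tsz r < (tsz u).+1)%N by lia.
  rewrite (bigD1 (Ordinal Hr)) //= eqxx big1 ?addr0; last first.
    move=> i ne; rewrite andbT; case: eqP => // E; move: ne; rewrite -val_eqE /= E eqxx //.
  rewrite big_mkcond (bigD1_seq (under r s)) ?trees_uniq //=; last first.
    by rewrite mem_trees tsize_under Hs.
  rewrite H eqxx big1 ?addr0 // => t ne; case: ifP => //; by rewrite (negPf ne).
rewrite big1; last by move=> i _; rewrite andbF.
apply/esym.
rewrite big1_seq // => t /andP[Ht _]; case: eqP => // E; by move: Ht H; rewrite E => ->.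
Qed.

Lemma DeltaE x : Delta x = lext DeltaF x.
Proof. by []. Qed.

Lemma Phi2_Delta x : Phi2 (Delta x) = lext Dp (Phi x).
Proof.
rewrite DeltaE /Phi2 /Phi !lext_lext; apply: lext_eq => u; exact: Phi2_DeltaF.
Qed.

Lemma Delta_M t : Delta (M t) =
  \sum_(j < (size (prog_decomp t)).+1)
     tens (M (fold (take j (prog_decomp t)))) (M (fold (drop j (prog_decomp t)))).
Proof.
rewrite -[Delta (M t)]Psi2Phi2 Phi2_Delta Phi_M lext_F /Psi2 /Dp linear_sum.
by apply: eq_bigr => j _; rewrite /= lext_bas.
Qed.

Lemma coef_lext {K : choiceType} {K' : choiceType} (g : K -> {malg rat[K']}) z k :
  (lext g z)@_k = \sum_(w <- msupp z) z@_w * (g w)@_k.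
Proof. by rewrite /lext raddf_sum; apply: eq_bigr => w _; rewrite /= mcoeffZ. Qed.

Lemma tensn_cons v vs : tensn (v :: vs) = bil cons v (tensn vs).
Proof. by []. Qed.

Definition Tg (g : tree -> YSym) (z : TY) : TY := lext (fun w => tensn (map g w)) z.

Lemma Tg_cons g x y : Tg g (bil cons x y) = bil cons (lext g x) (Tg g y).
Proof.
rewrite /Tg bil_lin bil_lextL; apply: lext_eq => a.
by rewrite bil_lextR; apply: lext_eq => w; rewrite /= lext_bas.
Qed.

Lemma Tg_tensn g vs : Tg g (tensn vs) = tensn (map (lext g) vs).
Proof.
elim: vs => [|v vs IH]; first by rewrite /= /Tg lext_bas.
by rewrite tensn_cons Tg_cons IH.
Qed.

Lemma tensn_bas w : tensn (map bas w) = bas w.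
Proof. by elim: w => //= a w IH; rewrite IH -/(bil cons _ _) bil_bas. Qed.

Definition PhiT := Tg zf.
Definition PsiT := Tg M.

Lemma PsiT_PhiT z : PsiT (PhiT z) = z.
Proof.
rewrite /PsiT /PhiT /Tg lext_lext -[RHS]lext_basK; apply: lext_eq => w.
rewrite -/(Tg _ _).
rewrite Tg_tensn -map_comp -[RHS]tensn_bas; congr tensn; apply: eq_map => a /=.
exact: PsiZ.
Qed.

Lemma PhiT_PsiT z : PhiT (PsiT z) = z.
Proof.
rewrite /PsiT /PhiT /Tg lext_lext -[RHS]lext_basK; apply: lext_eq => w.
rewrite -/(Tg _ _).
rewrite Tg_tensn -map_comp -[RHS]tensn_bas; congr tensn; apply: eq_map => a /=.
exact: PhiM.
Qed.

Lemma PsiT_bas w : PsiT (bas w) = tensn (map M w).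
Proof. exact: lext_bas. Qed.

Fixpoint tc (vs : seq YSym) (w : seq tree) : rat :=
  match vs, w with
  | [::], [::] => 1
  | v :: vs', a :: w' => v@_a * tc vs' w'
  | _, _ => 0
  end.

Lemma coef_cons (x : YSym) (y : TY) (a : tree) (w : seq tree) : (bil cons x y)@_(a :: w) = x@_a * y@_w.
Proof. by rewrite (coef_bil_inj (h := @cons tree)) // => a' w'; rewrite eqseq_cons. Qed.

Lemma coef_cons_nil (x : YSym) (y : TY) : (bil cons x y)@_[::] = 0.
Proof. by rewrite coef_bil big1 // => a _; rewrite big1 // => b _; rewrite mulr0. Qed.

Lemma coef_tensn vs w : (tensn vs)@_w = tc vs w.
Proof.
elim: vs w => [|v vs IH] [|a w] /=.
- by rewrite mcoeff_bas.
- by rewrite mcoeff_bas.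
- exact: coef_cons_nil.
- by rewrite -/(bil cons _ _) coef_cons IH.
Qed.

Lemma tc_size vs w : size w != size vs -> tc vs w = 0.
Proof. by elim: vs w => [|v vs IH] [|a w] //= H; rewrite IH ?mulr0. Qed.

Lemma tc_cat vs1 vs2 w1 w2 : size w1 = size vs1 ->
  tc (vs1 ++ vs2) (w1 ++ w2) = tc vs1 w1 * tc vs2 w2.
Proof.
elim: vs1 w1 => [|v vs IH] [|a w] //= H; first by rewrite mul1r.
by rewrite IH ?mulrA //; case: H.
Qed.

Lemma sum_take_drop (w w1 w2 : seq tree) :
  \sum_(i < (size w).+1) ((take i w, drop i w) == (w1, w2))%:R = (w == w1 ++ w2)%:R :> rat.
Proof.
case: (eqVneq w (w1 ++ w2)) => [->|ne].
  have Hj : (size w1 < (size (w1 ++ w2)).+1)%N by rewrite size_cat; lia.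
  rewrite (bigD1 (Ordinal Hj)) //= take_size_cat // drop_size_cat // eqxx.
  rewrite big1 ?addr0 // => j ne; case: eqP => // -[E1 _]; exfalso.
  move/eqP: ne; apply; apply: val_inj => /=.
  have S : size (take j (w1 ++ w2)) = size w1 by rewrite E1.
  rewrite size_take in S; have := ltn_ord j.
  move: S; case: ltnP => ? S ?; lia.
rewrite big1 // => j _; case: eqP => // -[E1 E2]; move: ne.
by rewrite -E1 -E2 cat_take_drop eqxx.
Qed.

Lemma coef_deconc z w1 w2 : (deconc z)@_(w1, w2) = z@_(w1 ++ w2).
Proof.
rewrite /deconc raddf_sum /= -coef_sum_eq; apply: eq_bigr => w _.
by rewrite mcoeffZ raddf_sum /=; under eq_bigr do rewrite mcoeff_bas; rewrite sum_take_drop.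
Qed.

Lemma tc_split vs (w1 w2 : seq tree) : tc vs (w1 ++ w2) =
  \sum_(j < (size vs).+1) tc (take j vs) w1 * tc (drop j vs) w2.
Proof.
case: (leqP (size w1) (size vs)) => H.
  have Hj : (size w1 < (size vs).+1)%N by lia.
  rewrite (bigD1 (Ordinal Hj)) //= -tc_cat ?cat_take_drop ?size_take; last first.
    by case: ltnP => // H'; lia.
  rewrite big1 ?addr0 // => j ne; rewrite tc_size ?mul0r //.
  apply/negP => /eqP E; move/eqP: ne; apply; apply: val_inj => /=.
  have := ltn_ord j; move: E; rewrite size_take; case: ltnP => ? E ?; lia.
rewrite tc_size ?size_cat; last by apply/eqP; lia.
rewrite big1 // => j _; rewrite tc_size ?mul0r // size_take.
have Hj := ltn_ord j; case: ltnP => H1; rewrite gtn_eqF //; lia.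
Qed.

Lemma deconc_tensn vs : deconc (tensn vs) =
  \sum_(j < (size vs).+1) tens (tensn (take j vs)) (tensn (drop j vs)).
Proof.
apply/malgP => -[w1 w2]; rewrite coef_deconc coef_tensn raddf_sum /= tc_split.
by apply: eq_bigr => j _; rewrite coef_tens !coef_tensn.
Qed.

Section SpanMore.
Context {V : lmodType rat}.

Lemma inspan0 (P : V -> Prop) : inspan P 0.
Proof. by exists [::], [::]; split => //; rewrite big_ord0. Qed.

Lemma inspan_add (P : V -> Prop) a b : inspan P a -> inspan P b -> inspan P (a + b).
Proof.
move=> [vs1 [cs1 [H1 ->]]] [vs2 [cs2 [H2 ->]]].
exists (vs1 ++ vs2), (mkseq (fun i => cs1`_i) (size vs1) ++ cs2); split.
  by move=> w; rewrite mem_cat => /orP[/H1|/H2].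
rewrite size_cat big_split_ord /=; congr (_ + _); apply: eq_bigr => i _.
  by rewrite !nth_cat size_mkseq ltn_ord nth_mkseq.
by rewrite !nth_cat size_mkseq ltnNge leq_addr /= addKn.
Qed.

Lemma inspan_scale (P : V -> Prop) c a : inspan P a -> inspan P (c *: a).
Proof.
move=> [vs [cs [H ->]]]; exists vs, (mkseq (fun i => c * cs`_i) (size vs)); split => //.
rewrite scaler_sumr; apply: eq_bigr => i _; by rewrite nth_mkseq // scalerA.
Qed.

Lemma inspan_sum_ord (P : V -> Prop) n (f : 'I_n -> V) :
  (forall j, P (f j)) -> inspan P (\sum_(j < n) f j).
Proof.
elim: n f => [|n IH] f H; first by rewrite big_ord0; exact: inspan0.
rewrite big_ord_recr /=; apply: inspan_add; first exact: IH.
exact: inspan1.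
Qed.

End SpanMore.

Definition chig (w : seq tree) : YSym := if all progressive w then F (fold w) else 0.
Definition chi (y : TY) : YSym := lext chig y.
Definition chi' (x : YSym) : TY := lext (fun t => (bas (prog_decomp t) : TY)) x.
Definition phib (w : seq tree) : YSym := Psi (chi (PhiT (bas w))).

Lemma phiE z : lext phib z = Psi (chi (PhiT z)).
Proof.
rewrite -{2}(lext_basK z) /Psi /chi /PhiT /Tg !lext_lext; apply: lext_eq => w.
by rewrite /phib /Psi /chi /PhiT /Tg !lext_bas !lext_lext.
Qed.

Definition supp_prog (y : TY) := forall w, ~~ all progressive w -> y@_w = 0.

Lemma chi'_chi y : supp_prog y -> chi' (chi y) = y.
Proof.
move=> H; rewrite /chi' /chi lext_lext -[RHS]lext_basK; apply: lext_eq_in => w Hw.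
have Hp : all progressive w.
  by apply: contraLR Hw => /H E; rewrite -mcoeff_neq0 E eqxx.
by rewrite /chig Hp lext_F prog_fold.
Qed.

Lemma chi_chi' x : chi (chi' x) = x.
Proof.
rewrite /chi' /chi lext_lext -[RHS]lext_basK; apply: lext_eq => t.
by rewrite lext_bas /chig prog_all fold_prog.
Qed.

Lemma tensn_supp (S : pred tree) vs :
  (forall v, v \in vs -> forall a, ~~ S a -> v@_a = 0) ->
  forall w, ~~ (all S w && (size w == size vs)) -> (tensn vs)@_w = 0.
Proof.
move=> H w; rewrite coef_tensn.
elim: vs w H => [|v vs IH] [|a w] H //=.
rewrite eqSS -andbA negb_and => /orP[Ha|Hw].
  by rewrite (H v) ?mem_head // mul0r.
rewrite IH ?mulr0 //.
by move=> v' Hv'; apply: H; rewrite inE Hv' orbT.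
Qed.

Lemma PhiTD (y1 y2 : TY) : PhiT (y1 + y2) = PhiT y1 + PhiT y2.
Proof. by rewrite /PhiT /Tg linearD. Qed.
Lemma PhiTZ c (y1 : TY) : PhiT (c *: y1) = c *: PhiT y1.
Proof. by rewrite /PhiT /Tg linearZ. Qed.
Lemma PhiT0 : PhiT 0 = 0.
Proof. by rewrite /PhiT /Tg linear0. Qed.

Lemma PhiT_supp_tpow k z : tpow (YSymk 1) k z ->
  forall w, ~~ (all progressive w && (size w == k)) -> (PhiT z)@_w = 0.
Proof.
move=> Hz w Hw; move: z Hz; apply: inspan_ind.
- by rewrite PhiT0 mcoeff0.
- by move=> a b Ha Hb; rewrite PhiTD mcoeffD Ha Hb addr0.
- by move=> c a Ha; rewrite PhiTZ mcoeffZ Ha mulr0.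
- move=> y [vs [Hs [Hv ->]]]; rewrite /PhiT Tg_tensn.
  apply: (tensn_supp (S := progressive)); last by rewrite size_map Hs.
  move=> v /mapP[v' /Hv Hv' ->] a Ha.
  by apply: (YSymk_coef Hv'); rewrite inYk1.
Qed.

Lemma PhiT_supp_cofree z : cofreeQ (YSymk 1) z -> supp_prog (PhiT z).
Proof.
move=> Hz w Hw; move: z Hz; apply: inspan_ind.
- by rewrite PhiT0 mcoeff0.
- by move=> a b Ha Hb; rewrite PhiTD mcoeffD Ha Hb addr0.
- by move=> c a Ha; rewrite PhiTZ mcoeffZ Ha mulr0.
- move=> y [k Hk]; apply: (PhiT_supp_tpow Hk).
  by rewrite negb_and Hw.
Qed.

Lemma phi_PsiT w : all progressive w -> lext phib (PsiT (bas w)) = M (fold w).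
Proof.
by move=> Hw; rewrite phiE PhiT_PsiT /chi lext_bas /chig Hw Psi_F.
Qed.

Lemma M_Leaf : M Leaf = F Leaf.
Proof.
have := PsiZ Leaf.
have -> : zf Leaf = F Leaf.
  rewrite /zf /=.
  have -> : trees 0 = [:: Leaf] by [].
  rewrite big_cons big_nil.
  by case: tlebP => [_|[]]; [rewrite addr0|exact: tle_refl].
by rewrite lext_F.
Qed.

Lemma M_coef_Leaf t : t != Leaf -> (M t)@_Leaf = 0.
Proof.
move=> Ht; rewrite /M raddf_sum /= big1_seq // => s /andP[_ Hs].
rewrite mcoeffZ mcoeff_F; case: eqP => [E|]; last by rewrite mulr0.
move: Hs; rewrite E mem_trees; case: t Ht => //.
Qed.

Lemma tensmap_tens x y : tensmap (lext phib) (tens x y) = tens (lext phib x) (lext phib y).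
Proof.
rewrite /tensmap -/(lext _ _) [tens x y]tensE bil_lin [RHS]tensE bil_lextL; apply: lext_eq => a.
by rewrite bil_lextR; apply: lext_eq => b; rewrite /= !lext_bas.
Qed.

Lemma PsiT_lext y : PsiT y = lext (fun w => PsiT (bas w)) y.
Proof. by apply: lext_eq => w; rewrite PsiT_bas. Qed.

Lemma PhiD x y : Phi (x + y) = Phi x + Phi y.
Proof. by rewrite /Phi linearD. Qed.

Lemma part1a (x : YSym) : exists xs : seq YSym,
      (forall k, (k < size xs)%N -> YSymk k xs`_k) /\
      x = \sum_(k < size xs) xs`_k.
Proof.
set y := Phi x.
set K0 := (\max_(t <- msupp y) size (prog_decomp t)).+1.
exists (mkseq (fun k => Psi (\sum_(t <- msupp y | inYk k t) y@_t *: F t)) K0); split.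
  move=> k; rewrite size_mkseq => Hk; rewrite nth_mkseq //.
  rewrite /Psi linear_sum -big_filter /=.
  under eq_bigr do rewrite linearZ /= lext_F.
  apply: inspan_seq => t; rewrite mem_filter => /andP[Ht _]; by exists t.
rewrite size_mkseq.
under eq_bigr do rewrite nth_mkseq //.
rewrite /Psi -linear_sum /= (exchange_big_dep xpredT) //=.
rewrite -[LHS](PsiPhi x) /Psi -/y; congr (lext M _).
rewrite -[LHS]lext_basK /lext; apply: eq_big_seq => t Ht.
have Hk : (size (prog_decomp t) < K0)%N.
  by rewrite ltnS; apply: (leq_bigmax_seq (F := fun t => size (prog_decomp t))).
rewrite (bigD1 (Ordinal Hk)) /=; last by rewrite /inYk.
rewrite big1 ?addr0 // => k /andP[H1 H2]; exfalso; move: H2; apply/negP.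
by rewrite negbK -val_eqE /= eq_sym; move: H1; rewrite /inYk.
Qed.

Lemma part1b (xs : seq YSym) :
      (forall k, (k < size xs)%N -> YSymk k xs`_k) ->
      \sum_(k < size xs) xs`_k = 0 ->
      forall k, (k < size xs)%N -> xs`_k = 0.
Proof.
move=> H H0 k Hk; rewrite -(PsiPhi xs`_k); suff -> : Phi xs`_k = 0 by rewrite /Psi linear0.
apply/malgP => t; rewrite mcoeff0.
case: (boolP (inYk k t)) => Ht; last exact: (YSymk_coef (H k Hk)).
have := congr1 (fun z => (Phi z)@_t) H0; rewrite /= /Phi linear0 mcoeff0 linear_sum raddf_sum /=.
rewrite (bigD1 (Ordinal Hk)) //= big1 ?addr0 // => j ne.
apply: (YSymk_coef (H j (ltn_ord j))); move: Ht ne; rewrite /inYk => /eqP ->.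
by rewrite -val_eqE /= eq_sym.
Qed.

Lemma inYk_fold_take (ps : seq tree) j : all progressive ps -> (j <= size ps)%N ->
  inYk j (fold (take j ps)).
Proof.
move=> Hp Hj; rewrite /inYk prog_fold ?take_prog // size_take.
by case: ltnP => // H; apply/eqP; lia.
Qed.

Lemma inYk_fold_drop (ps : seq tree) j : all progressive ps ->
  inYk (size ps - j) (fold (drop j ps)).
Proof. by move=> Hp; rewrite /inYk prog_fold ?drop_prog // size_drop. Qed.

Lemma part2 k x : YSymk k x -> YSymk2 k (Delta x).
Proof.
move: x; apply: inspan_ind.
- rewrite DeltaE linear0; exact: inspan0.
- by move=> a b Ha Hb; rewrite !DeltaE linearD; apply: inspan_add.
- by move=> c a Ha; rewrite !DeltaE linearZ; apply: inspan_scale.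
- move=> w [t [Ht ->]]; rewrite Delta_M; apply: inspan_sum_ord => j.
  exists j, (size (prog_decomp t) - j)%N; do 2 eexists; split; last split; last split.
  - move: Ht; rewrite /inYk => /eqP <-; have := ltn_ord j; lia.
  - apply: inspan1; eexists; split; last reflexivity.
    apply: inYk_fold_take; [exact: prog_all|have := ltn_ord j; lia].
  - apply: inspan1; eexists; split; last reflexivity.
    exact: inYk_fold_drop (prog_all t).
  - by [].
Qed.

Lemma part3 k x : (0 < k)%N -> YSymk k x -> eps x = 0.
Proof.
move=> Hk; move: x; apply: inspan_ind; rewrite /eps.
- exact: mcoeff0.
- by move=> a b Ha Hb; rewrite mcoeffD Ha Hb addr0.
- by move=> c a Ha; rewrite mcoeffZ Ha mulr0.
- move=> w [t [Ht ->]]; apply: M_coef_Leaf; case: t Ht => //.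
  by rewrite /inYk /=; case: k Hk.
Qed.

Lemma msupp_prog y w : supp_prog y -> w \in msupp y -> all progressive w.
Proof. by move=> H Hw; apply: contraLR Hw => /H E; rewrite -mcoeff_neq0 E eqxx. Qed.

Lemma phi_inj z : cofreeQ (YSymk 1) z -> PsiT (chi' (Phi (lext phib z))) = z.
Proof.
move=> Hz; rewrite phiE PhiPsi chi'_chi ?PsiT_PhiT //; exact: PhiT_supp_cofree.
Qed.

Lemma phi_surj (x : YSym) : exists z, cofreeQ (YSymk 1) z /\ lext phib z = x.
Proof.
exists (PsiT (chi' (Phi x))); split; last by rewrite phiE PhiT_PsiT chi_chi' PsiPhi.
rewrite PsiT_lext /chi' lext_lext {1}/lext; apply: inspan_seq => t _.
rewrite lext_bas PsiT_bas; exists (size (prog_decomp t)).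
apply: inspan1.
exists (map M (prog_decomp t)); split; first by rewrite size_map.
split; last by [].
move=> v /mapP[p Hp ->]. apply: inspan1. exists p; split; last by [].
rewrite inYk1; exact: (allP (prog_all t)).
Qed.

Lemma phi_graded k z : tpow (YSymk 1) k z -> YSymk k (lext phib z).
Proof.
move=> Hz; apply: YSymk_supp => t Ht; apply: contraLR Ht => Hk.
rewrite -mcoeff_eq0 phiE PhiPsi /chi coef_lext; apply/eqP; rewrite big1 // => w _.
case: (boolP (all progressive w && (size w == k))) => Hw; last first.
  by rewrite (PhiT_supp_tpow Hz Hw) mul0r.
case/andP: Hw => Hp Hs; rewrite /chig Hp mcoeff_F; case: eqP => [E|]; last by rewrite mulr0.
by move: Hk; rewrite -E /inYk prog_fold // Hs.
Qed.

Lemma tensmapE (f : TY -> YSym) z :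
  tensmap f z = lext (fun p : seq tree * seq tree => tens (f (bas p.1)) (f (bas p.2))) z.
Proof. by []. Qed.
Lemma deconcE (z : TY) : deconc z =
  lext (fun w : seq tree => \sum_(i < (size w).+1) (bas (take i w, drop i w) : TY2)) z.
Proof. by []. Qed.

Lemma Delta_M_fold w : all progressive w -> Delta (M (fold w)) =
  \sum_(j < (size w).+1) tens (M (fold (take j w))) (M (fold (drop j w))).
Proof. by move=> Hw; rewrite Delta_M prog_fold. Qed.

Lemma phi_coalg z : cofreeQ (YSymk 1) z ->
  Delta (lext phib z) = tensmap (lext phib) (deconc z).
Proof.
move=> Hz; have Hs := PhiT_supp_cofree Hz.
rewrite -(PsiT_PhiT z) PsiT_lext; set y := PhiT z in Hs *.
clearbody y.
rewrite DeltaE (lext_comp (lext phib)) lext_lext tensmapE deconcE !lext_lext.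
apply: lext_eq_in => w /(msupp_prog Hs) Hp /=.
rewrite -[RHS](lext_lext _ _ (PsiT (bas w))) -deconcE -tensmapE -DeltaE.
rewrite phi_PsiT // Delta_M_fold // PsiT_bas deconc_tensn size_map.
rewrite tensmapE linear_sum /=; apply: eq_bigr => j _.
rewrite -tensmapE tensmap_tens -!map_take -!map_drop -!PsiT_bas !phi_PsiT //.
  exact: drop_prog.
exact: take_prog.
Qed.

Lemma phi_eps z : cofreeQ (YSymk 1) z -> eps (lext phib z) = epsQ z.
Proof.
move=> Hz; have Hs := PhiT_supp_cofree Hz.
rewrite -(PsiT_PhiT z) PsiT_lext; set y := PhiT z in Hs *; clearbody y.
rewrite lext_comp /eps /epsQ !coef_lext; apply: eq_big_seq => w /(msupp_prog Hs) Hp.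
rewrite /= phi_PsiT // PsiT_bas coef_tensn; congr (_ * _).
case: w Hp => [|a w] Hp /=; first by rewrite M_Leaf mcoeff_F.
apply: M_coef_Leaf; apply/eqP => E.
by have := prog_fold Hp; rewrite /= E.
Qed.

Theorem theorem5p2 :
  (forall x : YSym, exists xs : seq YSym,
      (forall k, (k < size xs)%N -> YSymk k xs`_k) /\
      x = \sum_(k < size xs) xs`_k) /\
  (forall xs : seq YSym,
      (forall k, (k < size xs)%N -> YSymk k xs`_k) ->
      \sum_(k < size xs) xs`_k = 0 ->
      forall k, (k < size xs)%N -> xs`_k = 0) /\
  (forall k x, YSymk k x -> YSymk2 k (Delta x)) /\
  (forall k x, (0 < k)%N -> YSymk k x -> eps x = 0) /\
  (exists phi : {linear TY -> YSym},
      (forall z1 z2, cofreeQ (YSymk 1) z1 -> cofreeQ (YSymk 1) z2 ->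
                     phi z1 = phi z2 -> z1 = z2) /\
      (forall x : YSym, exists z, cofreeQ (YSymk 1) z /\ phi z = x) /\
      (forall k z, tpow (YSymk 1) k z -> YSymk k (phi z)) /\
      (forall z, cofreeQ (YSymk 1) z -> Delta (phi z) = tensmap phi (deconc z)) /\
      (forall z, cofreeQ (YSymk 1) z -> eps (phi z) = epsQ z)).
Proof.
split; first exact: part1a.
split; first exact: part1b.
split; first exact: part2.
split; first exact: part3.
exists (lext phib); split.
  by move=> z1 z2 H1 H2 E; rewrite -(phi_inj H1) -(phi_inj H2) E.
split; first exact: phi_surj.
split; first exact: phi_graded.
split; first exact: phi_coalg.
exact: phi_eps.
Qed.
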